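(* Let $n\ge 2$, let $a_1,\dots,a_n$ be positive integers, let $b\ge 0$ be an integer, and let $M$ be the least common multiple of $a_1,\dots,a_n$ (more generally, $M$ may be taken to be any positive common multiple of $a_1,\dots,a_n$). Put $d_i=M/a_i$ for $i=1,\dots,n$, and $$f(t_1,\dots,t_n)=\frac{1}{M}\Bigl(b-\sum_{i=1}^n a_it_i\Bigr).$$ Let $P(b)$ be the number of $n$-tuples $(x_1,\dots,x_n)$ of non-negative integers with $\sum_{i=1}^n a_ix_i=b$. Then $$P(b)=\sum_{t_1=0}^{d_1-1}\sum_{t_2=0}^{d_2-1}\cdots\sum_{t_n=0}^{d_n-1} C\bigl(f(t_1,\dots,t_n)+1;\,n-1\bigr).$$
   Context: For a real number $k$ and a non-negative integer $l$, define $C(k;l)=\frac{1}{l!}\,k(k+1)\cdots(k+l-1)$ if $k$ is a positive integer (natural number), and $C(k;l)=0$ otherwise (in particular $C(k;l)=0$ whenever $k$ is not an integer or $k\le 0$). *)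

(* Defs.v *)
From HB Require Import structures.
From mathcomp Require Import all_boot all_order all_algebra.
Set Implicit Arguments. Unset Strict Implicit. Unset Printing Implicit Defensive.
Import Order.TTheory GRing.Theory Num.Theory.
Local Open Scope ring_scope.

Definition Cfun (k : rat) (l : nat) : rat :=
  if (k \is a Num.nat) && (0 < k)
  then (\prod_(i < l) (k + i%:R)) / (l`!)%:R
  else 0.

(* P(b): number of n-tuples (x_1..x_n) of nonnegative integers with
   sum a_i x_i = b.  Since every a_i >= 1, each x_i <= b, so the tuples
   range over {ffun 'I_n -> 'I_b.+1} without loss. *)
Definition Pcount (n : nat) (a : 'I_n -> nat) (b : nat) : nat :=
  #|[set x : {ffun 'I_n -> 'I_b.+1} | (\sum_(i < n) a i * x i)%N == b]|.

Definition ffun_val (n : nat) (a : 'I_n -> nat) (b M : nat) (t : 'I_n -> nat) : rat :=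
  (b%:R - \sum_(i < n) (a i)%:R * (t i)%:R) / M%:R.

(* Main.v *)
Require Import Defs.
From HB Require Import structures.
From mathcomp Require Import all_boot all_order all_algebra zify.
Import Order.TTheory GRing.Theory Num.Theory.
Local Open Scope ring_scope.

Lemma le_sum_nat n (F : 'I_n -> nat) i : (F i <= \sum_j F j)%N.
Proof. by rewrite (bigD1 i) //= leq_addr. Qed.

Lemma key n (a : 'I_n -> nat) M (x t : 'I_n -> nat) :
  (forall i, a i %| M)%N -> (forall i, x i %% (M %/ a i) = t i)%N ->
  (\sum_i a i * x i = \sum_i a i * t i + M * \sum_i x i %/ (M %/ a i))%N.
Proof.
move=> Hd Hm; rewrite big_distrr -big_split; apply: eq_bigr => i _ /=.
rewrite {1}(divn_eq (x i) (M %/ a i)) Hm mulnDr addnC; congr (_ + _)%N.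
by rewrite mulnCA [(a i * (M %/ a i))%N]mulnC divnK // mulnC.
Qed.

Lemma Cfun_ne0 (q : rat) l : Cfun (q + 1) l != 0 -> exists k : nat, q = k%:R.
Proof.
rewrite /Cfun; case: ifP; last by rewrite eqxx.
case/andP => /natrP [k Hk] Hpos _; exists k.-1.
move: Hpos; rewrite Hk ltr0n => Hk0.
apply: (addIr 1); rewrite Hk natr1 prednK //.
Qed.

Lemma card_parts m k : #|[set s : {ffun 'I_m.+1 -> 'I_k.+1} | (\sum_(i < m.+1) s i == k)%N]| = 'C(m + k, m).
Proof.
rewrite -card_ord_partitions.
pose g (t : m.+1.-tuple 'I_k.+1) := [ffun i => tnth t i].
have ginj : injective g.
  move=> t t' /ffunP H; apply: eq_from_tnth => i; have := H i; by rewrite !ffunE.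
rewrite -(card_imset _ ginj); apply: eq_card => s.
rewrite inE; apply/idP/imsetP.
  move=> Hs; exists [tuple s i | i < m.+1].
    by rewrite inE big_tuple; under eq_bigr do rewrite tnth_mktuple.
  by apply/ffunP => i; rewrite ffunE tnth_mktuple.
move=> [t]; rewrite inE big_tuple => Ht ->.
by under eq_bigr do rewrite ffunE.
Qed.

Lemma rising k l : ('C(k + l, l) * l`! = \prod_(i < l) (k + 1 + i))%N.
Proof.
rewrite bin_ffact; elim: l => [|l IH]; first by rewrite big_ord0.
rewrite big_ord_recr /= -IH addnS ffactSS mulnC; congr (_ * _)%N; lia.
Qed.

Lemma Cfun_nat (k l : nat) : Cfun (k%:R + 1) l = ('C(k + l, l))%:R.
Proof.
rewrite /Cfun natr1 natr_nat /= ltr0Sn /=.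
have -> : \prod_(i < l) (k.+1%:R + i%:R) = (\prod_(i < l) (k + 1 + i))%N%:R :> rat.
  by rewrite natr_prod; apply: eq_bigr => i _; rewrite -natrD addn1.
rewrite -rising natrM mulfK // pnatr_eq0 -lt0n; exact: fact_gt0.
Qed.

Lemma fval n (a : 'I_n -> nat) b M t :
  ffun_val a b M t = (b%:R - (\sum_i a i * t i)%N%:R) / M%:R.
Proof. by rewrite /ffun_val natr_sum; congr ((_ - _) / _); apply: eq_bigr => i _; rewrite natrM. Qed.

Lemma step2 m (a : 'I_m.+1 -> nat) (b M : nat) (t : 'I_m.+1 -> nat) :
  (forall i, 0 < a i)%N ->
  (0 < M)%N ->
  (forall i, a i %| M)%N ->
  (forall i, t i < M %/ a i)%N ->
  (#|[set x : {ffun 'I_m.+1 -> 'I_b.+1} | (\sum_(i < m.+1) a i * x i == b)%N &&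
          [forall i, (x i %% (M %/ a i) == t i)%N]]|)%:R = Cfun (ffun_val a b M t + 1) m.
Proof.
move=> ha hM hd ht.
have dpos i : (0 < M %/ a i)%N by rewrite divn_gt0 // dvdn_leq.
set S := (\sum_i a i * t i)%N.
set St := [set x | _].
have keyx x : x \in St -> exists Q, (b = S + M * Q /\ (forall i, nat_of_ord (x i) = t i + M %/ a i * (x i %/ (M %/ a i))) /\ Q = \sum_i x i %/ (M %/ a i))%N.
  rewrite inE => /andP[/eqP Hb /forallP Hm].
  exists (\sum_i x i %/ (M %/ a i))%N; split; last split => //.
    by move: Hb; rewrite (key _ _ _ (fun i => nat_of_ord (x i)) t hd) => [->|i] //; apply/eqP; exact: Hm.
  by move=> i; rewrite {1}(divn_eq (x i) (M %/ a i)) (eqP (Hm i)) addnC mulnC.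
case C: ((S <= b) && (M %| b - S))%N; last first.
  have -> : #|St| = 0%N.
    apply: eq_card0 => x; apply/negP => /keyx [Q [Hb _]].
    move: C; rewrite Hb leq_addr /= addKn dvdn_mulr //.
  rewrite /=; apply/esym/eqP; apply/negP => /negP /Cfun_ne0 [k].
  rewrite fval => /(congr1 (fun z => z * M%:R)); rewrite mulfVK; last by rewrite pnatr_eq0 -lt0n.
  move/(congr1 (fun z => z + S%:R)); rewrite subrK -natrM -natrD => /eqP; rewrite eqr_nat => /eqP Hb.
  by move: C; rewrite Hb leq_addl /= addnK dvdn_mull.
move/andP: C => [C1 /dvdnP [k Hk]].
have Hb : b = (S + M * k)%N by rewrite mulnC -Hk subnKC.
have -> : ffun_val a b M t = k%:R.
  rewrite fval Hb natrD addrAC subrr add0r natrM.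
  by rewrite [M%:R * _]mulrC mulfK // pnatr_eq0 -lt0n.
rewrite Cfun_nat; congr (_%:R); rewrite addnC -card_parts.
set T := [set s : {ffun 'I_m.+1 -> 'I_k.+1} | _].
have bnd s i : s \in T -> (t i + M %/ a i * s i <= b)%N.
  rewrite inE => /eqP Hs.
  apply: leq_trans (leq_pmull _ (ha i)) _.
  rewrite mulnDr mulnA [(a i * (M %/ a i))%N]mulnC divnK // Hb.
  apply: leq_add; first by rewrite /S (bigD1 i) //= leq_addr.
  rewrite leq_mul2l; apply/orP; right.
  apply: leq_trans (_ : _ <= \sum_(j < m.+1) s j)%N _; last by rewrite Hs.
  by rewrite (bigD1 i) //= leq_addr.
pose g (s : {ffun 'I_m.+1 -> 'I_k.+1}) : {ffun 'I_m.+1 -> 'I_b.+1} :=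
  [ffun i => inord (t i + M %/ a i * s i)].
have gval s i : s \in T -> nat_of_ord (g s i) = (t i + M %/ a i * s i)%N.
  by move=> Hs; rewrite ffunE inordK // ltnS bnd.
rewrite -(card_in_imset (f:=g)); last first.
  move=> s s' Hs Hs' /ffunP H; apply/ffunP => i; apply: val_inj.
  move: (congr1 val (H i)); rewrite /= !gval // => /eqP.
  by rewrite eqn_add2l eqn_pmul2l // => /eqP.
apply: eq_card => x; apply/idP/imsetP.
  move=> Hx; have [Q [HbQ [Hxi HQ]]] := keyx x Hx.
  have Qk : Q = k.
    by move/eqP: HbQ; rewrite {1}Hb eqn_add2l eqn_pmul2l // => /eqP.
  have qle i : (x i %/ (M %/ a i) <= k)%N.
    by rewrite -Qk HQ (bigD1 i) //= leq_addr.
  pose s : {ffun 'I_m.+1 -> 'I_k.+1} := [ffun i => inord (x i %/ (M %/ a i))].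
  have Hs : s \in T.
    rewrite inE; apply/eqP; rewrite -[RHS]Qk HQ; apply: eq_bigr => i _.
    by rewrite ffunE inordK // ltnS qle.
  exists s => //; apply/ffunP => i; apply: val_inj.
  by rewrite /= gval // ffunE inordK ?ltnS ?qle // -Hxi.
move=> [s Hs ->]; rewrite inE; apply/andP; split.
  under eq_bigr => i _ do rewrite gval //.
  have E : (\sum_i a i * (t i + M %/ a i * s i) = S + M * \sum_i s i)%N.
    rewrite big_distrr -big_split /=; apply: eq_bigr => i _.
    by rewrite mulnDr mulnA [(a i * (M %/ a i))%N]mulnC divnK.
  have Hs' : (\sum_i nat_of_ord (s i) = k)%N by move: Hs; rewrite inE => /eqP.
  by rewrite E Hs' -Hb.
by apply/forallP => i; rewrite gval // addnC mulnC modnMDl modn_small.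
Qed.

Lemma test (m : nat) (a : 'I_m.+1 -> nat) (b M : nat) :
  (forall i, 0 < a i)%N ->
  (0 < M)%N ->
  (forall i, a i %| M)%N ->
  (Pcount a b =
    \sum_(t : {ffun 'I_m.+1 -> 'I_M} | [forall i, (t i < M %/ a i)%N])
      #|[set x : {ffun 'I_m.+1 -> 'I_b.+1} | (\sum_(i < m.+1) a i * x i == b)%N &&
          [forall i, x i %% (M %/ a i) == t i]]|)%N.
Proof.
move=> ha hM hd.
have dpos i : (0 < M %/ a i)%N by rewrite divn_gt0 // dvdn_leq.
have dle i : (M %/ a i <= M)%N by apply: leq_div.
have Hlt i y : (y %% (M %/ a i) < M)%N.
  exact: leq_trans (ltn_pmod _ (dpos i)) (dle i).
pose p (x : {ffun 'I_m.+1 -> 'I_b.+1}) : {ffun 'I_m.+1 -> 'I_M} :=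
  [ffun i => Ordinal (Hlt i (x i))].
rewrite /Pcount -sum1dep_card (partition_big p (fun t : {ffun 'I_m.+1 -> 'I_M} => [forall i, (t i < M %/ a i)%N])).
  apply: eq_bigr => t _; rewrite sum1dep_card; apply: eq_card => x.
  rewrite !inE; congr (_ && _).
  apply/eqP/forallP => [<- i|H]; first by rewrite ffunE.
  by apply/ffunP => i; apply: val_inj; rewrite ffunE /=; apply/eqP.
by move=> x _; apply/forallP => i; rewrite ffunE /= ltn_pmod.
Qed.

Theorem mainTheorem1 (n : nat) (a : 'I_n -> nat) (b M : nat) :
  (2 <= n)%N ->
  (forall i, 0 < a i)%N ->
  (0 < M)%N ->
  (forall i, a i %| M)%N ->
  (Pcount a b)%:R =
    \sum_(t : {ffun 'I_n -> 'I_M} | [forall i, (t i < M %/ a i)%N])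
      Cfun (ffun_val a b M (fun i => nat_of_ord (t i)) + 1) n.-1.
Proof.
case: n a => [|m] a hn ha hM hd; first done.
rewrite (@test m a b M ha hM hd) natr_sum; apply: eq_bigr => t /forallP Ht /=.
exact: step2.
Qed.
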